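(* Let $k\ge 1$, $\alpha=(\alpha_1,\dots,\alpha_k)\in\mathbb{N}^k$ and $\sigma\in S_k$ a permutation of $\{1,\dots,k\}$. Then for every finite simple undirected graph, $$w_{\alpha_1+\alpha_{\sigma(1)}}\cdots w_{\alpha_k+\alpha_{\sigma(k)}}\le w_{2\alpha_1}\cdots w_{2\alpha_k}.$$
   Context: $\mathbb{N}$ denotes the nonnegative integers. For $j\in\mathbb{N}$, $w_j$ denotes the total number of walks of length $j$ in the graph (a walk is a sequence of vertices in which consecutive vertices are adjacent; vertices and edges may repeat; the length is the number of edges). *)

(* Defs.v *)
From mathcomp Require Import all_boot all_order all_algebra all_fingroup.
Set Implicit Arguments. Unset Strict Implicit. Unset Printing Implicit Defensive.

Definition simple_graph (T : finType) (e : rel T) : Prop :=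
  symmetric e /\ irreflexive e.

Definition is_walk (T : finType) (e : rel T) (j : nat) (t : j.+1.-tuple T) : bool :=
  path e (thead t) (behead t).

Definition nwalks (T : finType) (e : rel T) (j : nat) : nat :=
  #|[set t : j.+1.-tuple T | is_walk e t]|.

(* Main.v *)
Require Import Defs.
From mathcomp Require Import all_boot all_order all_algebra all_fingroup.
Set Implicit Arguments. Unset Strict Implicit.

Section S.
Variables (T : finType) (e : rel T).

Lemma sum_tupleS n (F : n.+1.-tuple T -> nat) :
  \sum_(t : n.+1.-tuple T) F t = \sum_(x : T) \sum_(t : n.-tuple T) F [tuple of x :: t].
Proof.
rewrite pair_big /=.
rewrite (reindex (fun p : T * n.-tuple T => [tuple of p.1 :: p.2])) //=.
exists (fun t : n.+1.-tuple T => (thead t, [tuple of behead t])).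
  by case=> x t _; congr pair; apply: val_inj.
by move=> t _; case/tupleP: t => x t; apply: val_inj.
Qed.

Lemma sum_tuple0 (F : 0.-tuple T -> nat) : \sum_(t : 0.-tuple T) F t = F [tuple].
Proof.
rewrite (eq_bigr (fun _ => F [tuple])); last by move=> t _; rewrite tuple0.
by rewrite sum_nat_const card_tuple expn0 mul1n.
Qed.

Lemma card_sum (U : finType) (P : pred U) : #|[set t | P t]| = \sum_t (P t : nat).
Proof. rewrite -sum1_card big_mkcond /=; apply: eq_bigr => t _; rewrite inE; by case: (P t). Qed.

Fixpoint W j u v : nat := if j is j'.+1 then \sum_x (e u x : nat) * W j' x v else (u == v : nat).

Definition A j u := \sum_v W j u v.

Lemma count_head j u :
  \sum_(t : j.+1.-tuple T) (is_walk e t && (thead t == u) : nat) = A j u.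
Proof.
elim: j u => [|j IH] u.
  rewrite sum_tupleS /A /=; apply: eq_bigr => x _; rewrite sum_tuple0 /=.
  by rewrite /is_walk /= eq_sym.
rewrite sum_tupleS /A /= (bigD1 u) //= [X in _ + X = _]big1 ?addn0; last first.
  move=> x xu; apply: big1 => t _; by rewrite /= (negbTE xu) andbF.
rewrite exchange_big /=.
transitivity (\sum_y (e u y : nat) * \sum_(t : j.+1.-tuple T) (is_walk e t && (thead t == y) : nat)).
  rewrite (eq_bigr (fun t : j.+1.-tuple T => \sum_y (e u y : nat) * (is_walk e t && (thead t == y) : nat))).
    by rewrite exchange_big /=; apply: eq_bigr => y _; rewrite big_distrr.
  move=> t _; rewrite eqxx andbT (bigD1 (thead t)) //= big1 ?addn0; last first.
    by move=> y yt; rewrite eq_sym (negbTE yt) andbF muln0.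
  case/tupleP: t => y t; rewrite /is_walk /= eqxx andbT.
  by case: (e u y); case: (path _ _ _).
transitivity (\sum_y \sum_v (e u y : nat) * W j y v).
  by apply: eq_bigr => y _; rewrite IH /A big_distrr.
by [].
Qed.

Lemma nwalksE j : nwalks e j = \sum_u A j u.
Proof.
rewrite /nwalks card_sum.
transitivity (\sum_(t : j.+1.-tuple T) \sum_u (is_walk e t && (thead t == u) : nat)).
  apply: eq_bigr => t _; rewrite (bigD1 (thead t)) //= eqxx andbT big1 ?addn0 //.
  by move=> u ut; rewrite eq_sym (negbTE ut) andbF.
rewrite exchange_big; apply: eq_bigr => u _; exact: count_head.
Qed.

Lemma WD a b u v : W (a + b) u v = \sum_x W a u x * W b x v.
Proof.
elim: a u => [|a IH] u.
  rewrite add0n /= (bigD1 u) //= eqxx mul1n big1 ?addn0 // => x xu.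
  by rewrite eq_sym (negbTE xu).
rewrite addSn /=.
under eq_bigr do rewrite IH big_distrr.
under [RHS]eq_bigr do rewrite big_distrl.
rewrite exchange_big /=; apply: eq_bigr => x _; apply: eq_bigr => y _.
by rewrite mulnA.
Qed.

Lemma W1 x v : W 1 x v = e x v.
Proof.
rewrite /= (bigD1 v) //= eqxx muln1 big1 ?addn0 // => y yv.
by rewrite (negbTE yv) muln0.
Qed.

Lemma WSr j u v : W j.+1 u v = \sum_x W j u x * e x v.
Proof. by rewrite -addn1 WD; under eq_bigr do rewrite W1. Qed.

Lemma Wsym (se : symmetric e) j u v : W j u v = W j v u.
Proof.
elim: j u v => [|j IH] u v; first by rewrite /= eq_sym.
rewrite [RHS]WSr /=; apply: eq_bigr => x _.
by rewrite IH se mulnC.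
Qed.

Lemma w_add (se : symmetric e) a b : nwalks e (a + b) = \sum_x A a x * A b x.
Proof.
rewrite nwalksE /A.
transitivity (\sum_x \sum_u \sum_v W a u x * W b x v).
  under eq_bigr do under eq_bigr do rewrite WD.
  under eq_bigr do rewrite exchange_big.
  by rewrite exchange_big.
apply: eq_bigr => x _; rewrite big_distrl; apply: eq_bigr => u _.
by rewrite big_distrr (Wsym se a u x).
Qed.

End S.

Lemma CS (T : finType) (f g : T -> nat) :
  (\sum_x f x * g x) * (\sum_x f x * g x) <= (\sum_x f x * f x) * (\sum_x g x * g x).
Proof.
rewrite -(leq_pmul2l (isT : 0 < 2)).
have E1 : (\sum_x f x * g x) * (\sum_x f x * g x) = \sum_x \sum_y (f x * g y) * (f y * g x).
  rewrite big_distrl; apply: eq_bigr => x _; rewrite big_distrr; apply: eq_bigr => y _ /=.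
  by rewrite mulnACA [RHS]mulnACA (mulnC (g y)).
have E2 : 2 * ((\sum_x f x * f x) * (\sum_x g x * g x)) =
    \sum_x \sum_y ((f x * g y) ^ 2 + (f y * g x) ^ 2).
  under [RHS]eq_bigr do rewrite big_split.
  rewrite big_split /= mul2n -addnn; congr addn.
    rewrite big_distrl; apply: eq_bigr => x _; rewrite big_distrr; apply: eq_bigr => y _ /=.
    by rewrite expnMn.
  rewrite exchange_big big_distrl; apply: eq_bigr => x _; rewrite big_distrr; apply: eq_bigr => y _ /=.
  by rewrite expnMn.
rewrite E1 E2 big_distrr leq_sum // => x _; rewrite big_distrr leq_sum // => y _.
exact: (nat_Cauchy _ _).1.
Qed.

Theorem theorem3 (k : nat) (hk : 1 <= k) (alpha : 'I_k -> nat) (sigma : 'S_k)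
    (T : finType) (e : rel T) (he : simple_graph e) :
  \prod_(i < k) nwalks e (alpha i + alpha (sigma i))
  <= \prod_(i < k) nwalks e (2 * alpha i).
Proof.
have se : symmetric e by case: he.
have key i : nwalks e (alpha i + alpha (sigma i)) * nwalks e (alpha i + alpha (sigma i))
    <= nwalks e (2 * alpha i) * nwalks e (2 * alpha (sigma i)).
  by rewrite !mul2n -!addnn !w_add //; apply: CS.
rewrite -(leq_exp2r _ _ (isT : 0 < 2)) !expnS !expn0 !muln1 -!big_split /=.
apply: leq_trans (leq_prod (fun i _ => key i)) _.
rewrite big_split /=.
have -> : \prod_(i < k) nwalks e (2 * alpha (sigma i)) = \prod_(i < k) nwalks e (2 * alpha i).
  by rewrite [RHS](reindex_inj (@perm_inj _ sigma)).
by rewrite big_split.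
Qed.
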